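(* The following hold: (1) $F$ is of class $C^1$ on $(1,+\infty)$ and $F'<0$ on $(1,+\infty)$; (2) $\lim_{E\to+\infty}F(E)=-\infty$; (3) $\lim_{E\to1^+}F(E)=+\infty$ and $\lim_{E\to1^-}F(E)=+\infty$; (4) $F$ has a unique zero $E_c$ in $(1,+\infty)$, and $F'(E_c)<0$; (5) $F(E)>0$ for all $E\in(0,1)$.
   Context: For $E\in(0,1)\cup(1,+\infty)$, let $$F(E)=\int_{\sqrt{(2-2\sqrt E)_+}}^{\sqrt{2+2\sqrt E}}\frac{2-x^2}{\sqrt{E-(x^2/2-1)^2}}\,dx,$$ where $(z)_+=\max\{z,0\}$. *)

(* Defs.v *)
From Stdlib Require Import Reals.
From Coquelicot Require Import Coquelicot.
Open Scope R_scope.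

Definition integrand (E x : R) : R :=
  (2 - x ^ 2) / sqrt (E - (x ^ 2 / 2 - 1) ^ 2).

Definition lower_lim (E : R) : R := sqrt (Rmax (2 - 2 * sqrt E) 0).
Definition upper_lim (E : R) : R := sqrt (2 + 2 * sqrt E).

(* F(E) as an improper (generalized Riemann) integral over the open interval
   (lower_lim E, upper_lim E): the integrand is singular at the endpoints. *)
Definition F (E : R) : R :=
  RInt_gen (integrand E) (at_right (lower_lim E)) (at_left (upper_lim E)).

(* Main.v *)
Require Import Defs.
From Stdlib Require Import Reals Lra Psatz Ranalysis5.
From Coquelicot Require Import Coquelicot.
Open Scope R_scope.
Lemma cont_d (f : R -> R) x : ex_derive f x -> continuous f x.
Proof. intros H. apply (ex_derive_continuous (K:=R_AbsRing) (V:=R_NormedModule) f x H). Qed.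

Lemma asin_le y t : -1 <= y <= 1 -> -(PI/2) <= t <= PI/2 -> y <= sin t -> asin y <= t.
Proof.
  intros Hy Ht H. pose proof (asin_bound y). apply sin_incr_0; try lra.
  rewrite sin_asin; auto.
Qed.

Lemma asin_ge y t : -1 <= y <= 1 -> -(PI/2) <= t <= PI/2 -> sin t <= y -> t <= asin y.
Proof.
  intros Hy Ht H. pose proof (asin_bound y). apply sin_incr_0; try lra.
  rewrite sin_asin; auto.
Qed.

Lemma lt_sqrt_sq x Y : 0 <= x -> x < sqrt Y -> x * x < Y.
Proof.
  intros Hx H. destruct (Rle_or_lt Y 0) as [HY|HY].
  - rewrite sqrt_neg_0 in H; lra.
  - rewrite <- (sqrt_sqrt Y) by lra. apply Rmult_le_0_lt_compat; lra.
Qed.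

Lemma sqrt_lt_sq x Y : 0 <= Y -> 0 <= x -> sqrt Y < x -> Y < x * x.
Proof.
  intros HY Hx H. rewrite <- (sqrt_sqrt Y) by lra.
  pose proof (sqrt_pos Y). apply Rmult_le_0_lt_compat; lra.
Qed.

Definition Dp (s t : R) := 2 * (1 + s) * (sin t * sin t) + 2 * s - 2.
Definition Gp (s t : R) := 4 * s / sqrt (Dp s t) - 2 * sqrt (Dp s t).

Lemma Dp_pos s t : 1 < s -> 0 < Dp s t.
Proof. intros. unfold Dp. pose proof (Rle_0_sqr (sin t)). unfold Rsqr in *. nra. Qed.

Lemma integrand_cont E x : 0 < E - (x ^ 2 / 2 - 1) ^ 2 -> continuous (integrand E) x.
Proof.
  intros H. apply cont_d. unfold integrand. auto_derive.
  match goal with |- 0 < ?X /\ _ => assert (HX : X = E - (x ^ 2 / 2 - 1) ^ 2) by (simpl; field); rewrite HX end.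
  split; [exact H| split; [apply Rgt_not_eq, sqrt_lt_R0; exact H| auto]].
Qed.

Lemma Gp_eq E t : 1 < E -> 0 < cos t ->
  sqrt (2 + 2 * sqrt E) * cos t * integrand E (sqrt (2 + 2 * sqrt E) * sin t) = Gp (sqrt E) t.
Proof.
  intros HE Hc.
  set (s := sqrt E).
  assert (Hs : 1 < s) by (unfold s; rewrite <- sqrt_1; apply sqrt_lt_1_alt; lra).
  assert (Hss : s * s = E) by (unfold s; apply sqrt_sqrt; lra).
  set (b := sqrt (2 + 2 * s)).
  assert (Hb : 0 < b) by (unfold b; apply sqrt_lt_R0; lra).
  assert (Hbb : b * b = 2 + 2 * s) by (unfold b; apply sqrt_sqrt; lra).
  pose proof (Dp_pos s t Hs) as HD.
  set (q := sqrt (Dp s t)).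
  assert (Hq : 0 < q) by (unfold q; apply sqrt_lt_R0; lra).
  assert (Hqq : q * q = Dp s t) by (unfold q; apply sqrt_sqrt; lra).
  assert (Hy : (b * cos t * q / 2) * (b * cos t * q / 2) = E - ((b * sin t) ^ 2 / 2 - 1) ^ 2).
  { replace ((b * cos t * q / 2) * (b * cos t * q / 2)) with ((b * b) * (cos t * cos t) * (q * q) / 4) by field.
    rewrite Hbb, Hqq. unfold Dp. rewrite <- Hss.
    replace ((b * sin t) ^ 2) with ((b * b) * (sin t * sin t)) by ring. rewrite Hbb.
    pose proof (sin2_cos2 t) as H. unfold Rsqr in H.
    replace (cos t * cos t) with (1 - sin t * sin t) by lra. field. }
  unfold integrand, Gp. fold q.
  rewrite (sqrt_lem_1 _ (b * cos t * q / 2)).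
  - replace ((b * sin t) ^ 2) with ((b * b) * (sin t * sin t)) by ring.
    rewrite Hbb. field_simplify; [| lra| lra].
    unfold Dp in Hqq. replace (q ^ 2) with (q * q) by ring. rewrite Hqq.
    field. lra.
  - rewrite <- Hy. apply Rle_0_sqr.
  - assert (0 < b * cos t * q) by (repeat apply Rmult_lt_0_compat; lra). lra.
  - exact Hy.
Qed.
Lemma exR (h : R -> R) lo hi u v :
  (forall t, lo <= t <= hi -> continuous h t) ->
  lo <= u <= hi -> lo <= v <= hi -> ex_RInt h u v.
Proof.
  intros Hc Hu Hv. apply (ex_RInt_continuous (V:=R_CompleteNormedModule)). intros z Hz. apply Hc.
  split.
  - apply Rle_trans with (Rmin u v); [apply Rmin_glb; lra| lra].
  - apply Rle_trans with (Rmax u v); [lra| apply Rmax_lub; lra].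
Qed.

Lemma RInt_bound_abs (h : R -> R) lo hi M u v :
  (forall t, lo <= t <= hi -> continuous h t) ->
  (forall t, lo <= t <= hi -> Rabs (h t) <= M) ->
  lo <= u <= hi -> lo <= v <= hi -> u <= v ->
  Rabs (RInt h u v) <= (v - u) * M.
Proof.
  intros Hc Hb Hu Hv Huv. apply abs_RInt_le_const; auto.
  apply (exR h lo hi); auto.
  intros t Ht. apply Hb. lra.
Qed.

Lemma gen_improper (f h psi : R -> R) (a b lo hi M : R) :
  a < b -> lo < hi ->
  (forall t, lo <= t <= hi -> continuous h t) ->
  (forall t, lo <= t <= hi -> Rabs (h t) <= M) ->
  (forall x1 x2, a < x1 < b -> a < x2 < b -> is_RInt f x1 x2 (RInt h (psi x1) (psi x2))) ->
  (forall x, a < x < b -> lo <= psi x <= hi) ->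
  (forall d, 0 < d -> at_right a (fun x => psi x <= lo + d)) ->
  (forall d, 0 < d -> at_left b (fun x => hi - d <= psi x)) ->
  is_RInt_gen f (at_right a) (at_left b) (RInt h lo hi).
Proof.
  intros Hab Hlh Hc Hb Hcv Hpsi Hlo Hhi.
  intros P [eps HP].
  assert (HM : 0 <= M) by (pose proof (Hb lo ltac:(lra)); pose proof (Rabs_pos (h lo)); lra).
  set (d := eps / (4 * (M + 1))).
  assert (Hd : 0 < d) by (unfold d; apply Rdiv_lt_0_compat; [apply cond_pos| lra]).
  assert (HdM : 2 * d * M < eps).
  { unfold d. pose proof (cond_pos eps).
    apply Rlt_le_trans with (2 * (eps / (4 * (M + 1))) * (M + 1)).
    - apply Rmult_lt_compat_l. apply Rmult_lt_0_compat; [lra| apply Rdiv_lt_0_compat; lra]. lra.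
    - replace (2 * (eps / (4 * (M + 1))) * (M + 1)) with (eps / 2) by (field; lra). lra. }
  apply (Filter_prod _ _ _ (fun x => a < x < b /\ psi x <= lo + d) (fun x => a < x < b /\ hi - d <= psi x)).
  - apply filter_and; [| apply Hlo; auto].
    exists (mkposreal _ (proj2 (Rlt_0_minus _ _) Hab)). intros y Hy Hay.
    unfold ball in Hy; simpl in Hy; unfold AbsRing_ball, abs, minus, plus, opp in Hy; simpl in Hy.
    apply Rabs_lt_between in Hy. lra.
  - apply filter_and; [| apply Hhi; auto].
    exists (mkposreal _ (proj2 (Rlt_0_minus _ _) Hab)). intros y Hy Hay.
    unfold ball in Hy; simpl in Hy; unfold AbsRing_ball, abs, minus, plus, opp in Hy; simpl in Hy.
    apply Rabs_lt_between in Hy. lra.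
  - intros x1 x2 [H1 H1'] [H2 H2']. simpl.
    exists (RInt h (psi x1) (psi x2)). split; [apply Hcv; auto|].
    apply HP.
    pose proof (Hpsi x1 H1) as P1. pose proof (Hpsi x2 H2) as P2.
    assert (E1 : RInt h lo hi = RInt h lo (psi x1) + RInt h (psi x1) (psi x2) + RInt h (psi x2) hi).
    { rewrite <- (RInt_Chasles h lo (psi x1) hi). rewrite <- (RInt_Chasles h (psi x1) (psi x2) hi).
      unfold plus; simpl. ring.
      all: apply (exR h lo hi); auto; lra. }
    unfold ball; simpl; unfold AbsRing_ball, abs, minus, plus, opp; simpl.
    rewrite E1.
    pose proof (RInt_bound_abs h lo hi M lo (psi x1) Hc Hb ltac:(lra) P1 ltac:(lra)).
    pose proof (RInt_bound_abs h lo hi M (psi x2) hi Hc Hb P2 ltac:(lra) ltac:(lra)).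
    assert ((psi x1 - lo) * M <= d * M) by (apply Rmult_le_compat_r; lra).
    assert ((hi - psi x2) * M <= d * M) by (apply Rmult_le_compat_r; lra).
    replace (RInt h (psi x1) (psi x2) + - (RInt h lo (psi x1) + RInt h (psi x1) (psi x2) + RInt h (psi x2) hi))
      with (- (RInt h lo (psi x1) + RInt h (psi x2) hi)) by ring.
    rewrite Rabs_Ropp. eapply Rle_lt_trans. apply Rabs_triang. lra.
Qed.

Lemma integrand_dom_gt1 E z : 1 < E -> 0 <= z < sqrt (2 + 2 * sqrt E) ->
  0 < E - (z ^ 2 / 2 - 1) ^ 2.
Proof.
  intros HE Hz.
  set (s := sqrt E).
  assert (Hs : 1 < s) by (unfold s; rewrite <- sqrt_1; apply sqrt_lt_1_alt; lra).
  assert (Hss : s * s = E) by (unfold s; apply sqrt_sqrt; lra).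
  assert (Hz2 : z * z < 2 + 2 * s) by (apply lt_sqrt_sq; [lra| destruct Hz; assumption]).
  replace (z ^ 2) with (z * z) by ring. rewrite <- Hss.
  assert (0 <= z * z) by nra.
  replace (s * s - (z * z / 2 - 1) ^ 2) with ((s - (z * z / 2 - 1)) * (s + (z * z / 2 - 1))) by field.
  apply Rmult_lt_0_compat; lra.
Qed.

Ltac side_tac := repeat split; try lra; try (apply Rgt_not_eq, sqrt_lt_R0; lra).

Lemma Gp_cont s t : 1 < s -> continuous (Gp s) t.
Proof.
  intros Hs. pose proof (Dp_pos s t Hs) as HD. apply cont_d. unfold Gp. unfold Dp in *.
  auto_derive. side_tac.
Qed.

Lemma Gp_bound s t : 1 < s -> Rabs (Gp s t) <= 4 * s / sqrt (2 * s - 2) + 2 * sqrt (4 * s).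
Proof.
  intros Hs. pose proof (Dp_pos s t Hs) as HD.
  assert (HD1 : 2 * s - 2 <= Dp s t).
  { unfold Dp. pose proof (Rle_0_sqr (sin t)). unfold Rsqr in *. nra. }
  assert (HD2 : Dp s t <= 4 * s).
  { unfold Dp. pose proof (sin2_cos2 t). pose proof (Rle_0_sqr (cos t)). unfold Rsqr in *. nra. }
  assert (H1 : sqrt (2 * s - 2) <= sqrt (Dp s t)) by (apply sqrt_le_1_alt; lra).
  assert (H2 : sqrt (Dp s t) <= sqrt (4 * s)) by (apply sqrt_le_1_alt; lra).
  assert (H0 : 0 < sqrt (2 * s - 2)) by (apply sqrt_lt_R0; lra).
  assert (H3 : 4 * s / sqrt (Dp s t) <= 4 * s / sqrt (2 * s - 2)).
  { unfold Rdiv. apply Rmult_le_compat_l. lra. apply Rinv_le_contravar; lra. }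
  assert (H4 : 0 <= 4 * s / sqrt (Dp s t)).
  { unfold Rdiv. apply Rmult_le_pos. lra. left. apply Rinv_0_lt_compat. lra. }
  unfold Gp. pose proof (sqrt_pos (Dp s t)).
  apply Rabs_le. lra.
Qed.

Lemma F_gt1 E : 1 < E -> F E = RInt (Gp (sqrt E)) 0 (PI / 2).
Proof.
  intros HE.
  set (s := sqrt E).
  assert (Hs : 1 < s) by (unfold s; rewrite <- sqrt_1; apply sqrt_lt_1_alt; lra).
  set (b := sqrt (2 + 2 * s)).
  assert (Hb : 0 < b) by (unfold b; apply sqrt_lt_R0; lra).
  assert (Hlow : lower_lim E = 0).
  { unfold lower_lim. rewrite Rmax_right. apply sqrt_0. fold s. lra. }
  unfold F. rewrite Hlow. unfold upper_lim. fold s. fold b.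
  pose proof PI_RGT_0 as HPI.
  apply is_RInt_gen_unique.
  apply (gen_improper (integrand E) (Gp s) (fun x => asin (x / b)) 0 b 0 (PI/2)
           (4 * s / sqrt (2 * s - 2) + 2 * sqrt (4 * s))).
  - exact Hb.
  - lra.
  - intros t _. apply Gp_cont; exact Hs.
  - intros t _. apply Gp_bound; exact Hs.
  - intros x1 x2 Hx1 Hx2.
    assert (Hr : forall x, 0 < x < b -> -1 <= x / b <= 1 /\ 0 < x / b < 1).
    { intros x Hx. assert (0 < x / b < 1).
      { split. apply Rdiv_lt_0_compat; lra. apply Rmult_lt_reg_r with b; auto.
        unfold Rdiv. rewrite Rmult_assoc, Rinv_l; lra. }
      lra. }
    assert (Hbd : forall x, 0 < x < b -> 0 <= asin (x / b) < PI / 2).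
    { intros x Hx. destruct (Hr x Hx) as [H1 H2]. split.
      - apply asin_ge; auto. lra. rewrite sin_0; lra.
      - apply asin_bound_lt. lra. }
    assert (Hsa : forall x, 0 < x < b -> b * sin (asin (x / b)) = x).
    { intros x Hx. rewrite sin_asin by (apply Hr; auto). field. lra. }
    pose proof (Hbd x1 Hx1) as B1. pose proof (Hbd x2 Hx2) as B2.
    set (al := asin (x1 / b)) in *. set (be := asin (x2 / b)) in *.
    assert (Hin : forall t, Rmin al be <= t <= Rmax al be -> 0 <= t < PI / 2).
    { intros t [Ht1 Ht2]. split.
      - apply Rle_trans with (Rmin al be); auto. apply Rmin_glb; lra.
      - apply Rle_lt_trans with (Rmax al be); auto. apply Rmax_lub_lt; lra. }
    assert (Heq : RInt (Gp s) al be = RInt (integrand E) x1 x2).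
    { rewrite <- (RInt_ext (fun y => scal (b * cos y) (integrand E (b * sin y)))).
      - rewrite (RInt_comp (integrand E) (fun y => b * sin y) (fun y => b * cos y)).
        + unfold al, be. rewrite !Hsa; auto.
        + intros t Ht. apply integrand_cont. apply integrand_dom_gt1; auto.
          destruct (Hin t Ht) as [T1 T2]. split.
          * apply Rmult_le_pos; [lra|]. apply sin_ge_0; lra.
          * fold s. fold b. assert (sin t < 1).
            { rewrite <- sin_PI2. apply sin_increasing_1; lra. }
            nra.
        + intros t Ht. split.
          * auto_derive; auto. ring.
          * apply cont_d. auto_derive. auto.
      - intros t Ht. unfold scal; simpl; unfold mult; simpl.
        assert (Ht' : 0 <= t < PI / 2).
        { apply Hin; lra. }
        unfold b, s. rewrite Gp_eq; auto. apply cos_gt_0; lra. }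
    rewrite Heq. apply (RInt_correct (V:=R_CompleteNormedModule)).
    apply (ex_RInt_continuous (V:=R_CompleteNormedModule)).
    intros z Hz. apply integrand_cont. apply integrand_dom_gt1; auto. fold s. fold b.
    assert (Rmin x1 x2 > 0) by (apply Rmin_glb_lt; lra).
    assert (Rmax x1 x2 < b) by (apply Rmax_lub_lt; lra).
    lra.
  - intros x Hx. split.
    + assert (0 < x / b < 1).
      { split. apply Rdiv_lt_0_compat; lra. apply Rmult_lt_reg_r with b; auto.
        unfold Rdiv. rewrite Rmult_assoc, Rinv_l; lra. }
      apply asin_ge. lra. lra. rewrite sin_0. lra.
    + apply asin_bound.
  - intros d Hd.
    set (d' := Rmin d (PI / 2)).
    assert (Hd' : 0 < d' <= PI / 2 /\ d' <= d).
    { unfold d'. split; [split|]. apply Rmin_glb_lt; lra. apply Rmin_r. apply Rmin_l. }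
    assert (Hc : 0 < sin d' <= 1) by (split; [apply sin_gt_0; lra| apply SIN_bound]).
    assert (Hbc : 0 < b * sin d') by (apply Rmult_lt_0_compat; lra).
    exists (mkposreal _ Hbc). intros y Hy Hy0. simpl in Hy.
    unfold ball in Hy; simpl in Hy; unfold AbsRing_ball, abs, minus, plus, opp in Hy; simpl in Hy.
    apply Rabs_lt_between in Hy.
    assert (y / b < sin d').
    { apply Rmult_lt_reg_r with b; auto. unfold Rdiv. rewrite Rmult_assoc, Rinv_l; lra. }
    assert (0 < y / b) by (apply Rdiv_lt_0_compat; lra).
    assert (asin (y / b) <= d') by (apply asin_le; lra).
    lra.
  - intros d Hd.
    set (d' := Rmin d (PI / 2)).
    assert (Hd' : 0 < d' <= PI / 2 /\ d' <= d).
    { unfold d'. split; [split|]. apply Rmin_glb_lt; lra. apply Rmin_r. apply Rmin_l. }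
    assert (Hc : 0 <= cos d' < 1).
    { split. apply cos_ge_0; lra. rewrite <- cos_0. apply cos_decreasing_1; lra. }
    assert (Hbc : 0 < b * (1 - cos d')) by (apply Rmult_lt_0_compat; lra).
    exists (mkposreal _ Hbc). intros y Hy Hy0. simpl in Hy.
    unfold ball in Hy; simpl in Hy; unfold AbsRing_ball, abs, minus, plus, opp in Hy; simpl in Hy.
    apply Rabs_lt_between in Hy.
    assert (cos d' < y / b).
    { apply Rmult_lt_reg_r with b; auto. unfold Rdiv. rewrite Rmult_assoc, Rinv_l; lra. }
    assert (y / b < 1).
    { apply Rmult_lt_reg_r with b; auto. unfold Rdiv. rewrite Rmult_assoc, Rinv_l; lra. }
    assert (PI / 2 - d' <= asin (y / b)).
    { apply asin_ge. lra. lra. rewrite sin_shift. lra. }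
    lra.
Qed.


Lemma div_le_l u c k : 0 < k -> u <= c * k -> u / k <= c.
Proof. intros Hk H. apply Rmult_le_reg_r with k; auto. unfold Rdiv. rewrite Rmult_assoc, Rinv_l; lra. Qed.
Lemma div_ge_l u c k : 0 < k -> c * k <= u -> c <= u / k.
Proof. intros Hk H. apply Rmult_le_reg_r with k; auto. unfold Rdiv. rewrite Rmult_assoc, Rinv_l; lra. Qed.
Lemma div_lt_l u c k : 0 < k -> u < c * k -> u / k < c.
Proof. intros Hk H. apply Rmult_lt_reg_r with k; auto. unfold Rdiv. rewrite Rmult_assoc, Rinv_l; lra. Qed.
Lemma div_gt_l u c k : 0 < k -> c * k < u -> c < u / k.
Proof. intros Hk H. apply Rmult_lt_reg_r with k; auto. unfold Rdiv. rewrite Rmult_assoc, Rinv_l; lra. Qed.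

Definition Dm (s t : R) := 2 + 2 * s * sin t.
Definition Gm (s t : R) := 2 / sqrt (Dm s t) - sqrt (Dm s t).

Lemma Dm_bounds s t : 0 <= s < 1 -> 2 - 2 * s <= Dm s t <= 2 + 2 * s.
Proof. intros Hs. unfold Dm. pose proof (SIN_bound t). nra. Qed.

Lemma Dm_pos s t : 0 <= s < 1 -> 0 < Dm s t.
Proof. intros Hs. pose proof (Dm_bounds s t Hs). lra. Qed.

Lemma Gm_cont s t : 0 <= s < 1 -> continuous (Gm s) t.
Proof.
  intros Hs. pose proof (Dm_pos s t Hs) as HD. apply cont_d. unfold Gm. unfold Dm in *.
  auto_derive. side_tac.
Qed.

Lemma Gm_bound s t : 0 <= s < 1 -> Rabs (Gm s t) <= 2 / sqrt (2 - 2 * s) + 2.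
Proof.
  intros Hs. pose proof (Dm_bounds s t Hs) as [HD1 HD2].
  assert (H1 : sqrt (2 - 2 * s) <= sqrt (Dm s t)) by (apply sqrt_le_1_alt; lra).
  assert (H2 : sqrt (Dm s t) <= 2).
  { rewrite <- (sqrt_square 2) by lra. apply sqrt_le_1_alt; lra. }
  assert (H0 : 0 < sqrt (2 - 2 * s)) by (apply sqrt_lt_R0; lra).
  assert (H3 : 2 / sqrt (Dm s t) <= 2 / sqrt (2 - 2 * s)).
  { unfold Rdiv. apply Rmult_le_compat_l. lra. apply Rinv_le_contravar; lra. }
  assert (H4 : 0 <= 2 / sqrt (Dm s t)).
  { unfold Rdiv. apply Rmult_le_pos. lra. left. apply Rinv_0_lt_compat. lra. }
  unfold Gm. pose proof (sqrt_pos (Dm s t)).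
  apply Rabs_le. lra.
Qed.

Lemma Gm_eq E t : 0 < E < 1 -> 0 < cos t ->
  sqrt E * cos t / sqrt (Dm (sqrt E) t) * integrand E (sqrt (Dm (sqrt E) t)) = Gm (sqrt E) t.
Proof.
  intros HE Hc.
  set (s := sqrt E).
  assert (Hs : 0 < s < 1) by (unfold s; split; [apply sqrt_lt_R0; lra| rewrite <- sqrt_1; apply sqrt_lt_1_alt; lra]).
  assert (Hss : s * s = E) by (unfold s; apply sqrt_sqrt; lra).
  pose proof (Dm_pos s t ltac:(lra)) as HD.
  set (q := sqrt (Dm s t)).
  assert (Hq : 0 < q) by (unfold q; apply sqrt_lt_R0; lra).
  assert (Hqq : q * q = Dm s t) by (unfold q; apply sqrt_sqrt; lra).
  assert (Hy : (s * cos t) * (s * cos t) = E - (q ^ 2 / 2 - 1) ^ 2).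
  { replace (q ^ 2) with (q * q) by ring. rewrite Hqq. unfold Dm. rewrite <- Hss.
    pose proof (sin2_cos2 t) as H. unfold Rsqr in H.
    replace ((s * cos t) * (s * cos t)) with (s * s * (cos t * cos t)) by ring. replace (cos t * cos t) with (1 - sin t * sin t) by lra. field. }
  unfold integrand, Gm. fold q.
  rewrite (sqrt_lem_1 _ (s * cos t)).
  - field. split; lra.
  - rewrite <- Hy. apply Rle_0_sqr.
  - apply Rmult_le_pos; lra.
  - exact Hy.
Qed.

Lemma integrand_dom_lt1 E z : 0 < E < 1 -> sqrt (2 - 2 * sqrt E) < z < sqrt (2 + 2 * sqrt E) ->
  0 < E - (z ^ 2 / 2 - 1) ^ 2.
Proof.
  intros HE Hz.
  set (s := sqrt E) in *.
  assert (Hs : 0 < s < 1) by (unfold s; split; [apply sqrt_lt_R0; lra| rewrite <- sqrt_1; apply sqrt_lt_1_alt; lra]).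
  assert (Hss : s * s = E) by (unfold s; apply sqrt_sqrt; lra).
  pose proof (sqrt_pos (2 - 2 * s)).
  assert (Hz2 : z * z < 2 + 2 * s) by (apply lt_sqrt_sq; [lra| destruct Hz; assumption]).
  assert (Hz1 : 2 - 2 * s < z * z) by (apply sqrt_lt_sq; [lra|lra| destruct Hz; assumption]).
  replace (z ^ 2) with (z * z) by ring. rewrite <- Hss.
  replace (s * s - (z * z / 2 - 1) ^ 2) with ((s - (z * z / 2 - 1)) * (s + (z * z / 2 - 1))) by field.
  apply Rmult_lt_0_compat; lra.
Qed.

Lemma F_lt1 E : 0 < E < 1 -> F E = RInt (Gm (sqrt E)) (-(PI / 2)) (PI / 2).
Proof.
  intros HE.
  set (s := sqrt E).
  assert (Hs : 0 < s < 1) by (unfold s; split; [apply sqrt_lt_R0; lra| rewrite <- sqrt_1; apply sqrt_lt_1_alt; lra]).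
  set (a := sqrt (2 - 2 * s)).
  set (b := sqrt (2 + 2 * s)).
  assert (Ha : 0 < a) by (unfold a; apply sqrt_lt_R0; lra).
  assert (Hab : a < b) by (unfold a, b; apply sqrt_lt_1_alt; lra).
  assert (Haa : a * a = 2 - 2 * s) by (unfold a; apply sqrt_sqrt; lra).
  assert (Hbb : b * b = 2 + 2 * s) by (unfold b; apply sqrt_sqrt; lra).
  assert (Hlow : lower_lim E = a).
  { unfold lower_lim. rewrite Rmax_left. reflexivity. fold s. lra. }
  unfold F. rewrite Hlow. unfold upper_lim. fold s. fold b.
  pose proof PI_RGT_0 as HPI.
  assert (Hr : forall x, a < x < b -> -1 < (x * x - 2) / (2 * s) < 1).
  { intros x Hx.
    assert (x * x < 2 + 2 * s) by (apply lt_sqrt_sq; [lra| destruct Hx; assumption]).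
    assert (2 - 2 * s < x * x) by (apply sqrt_lt_sq; [lra|lra| destruct Hx; assumption]).
    split; [apply div_gt_l| apply div_lt_l]; lra. }
  assert (Hg : forall x, a < x < b -> sqrt (Dm s (asin ((x * x - 2) / (2 * s)))) = x).
  { intros x Hx. unfold Dm. rewrite sin_asin by (pose proof (Hr x Hx); lra).
    replace (2 + 2 * s * ((x * x - 2) / (2 * s))) with (x * x) by (field; lra).
    apply sqrt_square. lra. }
  apply is_RInt_gen_unique.
  apply (gen_improper (integrand E) (Gm s) (fun x => asin ((x * x - 2) / (2 * s))) a b (-(PI/2)) (PI/2)
           (2 / sqrt (2 - 2 * s) + 2)).
  - exact Hab.
  - lra.
  - intros t _. apply Gm_cont; lra.
  - intros t _. apply Gm_bound; lra.
  - intros x1 x2 Hx1 Hx2.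
    assert (Hbd : forall x, a < x < b -> -(PI/2) < asin ((x * x - 2) / (2 * s)) < PI / 2).
    { intros x Hx. apply asin_bound_lt. apply Hr; auto. }
    pose proof (Hbd x1 Hx1) as B1. pose proof (Hbd x2 Hx2) as B2.
    set (al := asin ((x1 * x1 - 2) / (2 * s))) in *. set (be := asin ((x2 * x2 - 2) / (2 * s))) in *.
    assert (Hin : forall t, Rmin al be <= t <= Rmax al be -> -(PI/2) < t < PI / 2).
    { intros t [Ht1 Ht2]. split.
      - apply Rlt_le_trans with (Rmin al be); auto. apply Rmin_glb_lt; lra.
      - apply Rle_lt_trans with (Rmax al be); auto. apply Rmax_lub_lt; lra. }
    assert (Heq : RInt (Gm s) al be = RInt (integrand E) x1 x2).
    { rewrite <- (RInt_ext (fun y => scal (s * cos y / sqrt (Dm s y)) (integrand E (sqrt (Dm s y))))).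
      - rewrite (RInt_comp (integrand E) (fun y => sqrt (Dm s y)) (fun y => s * cos y / sqrt (Dm s y))).
        + unfold al, be. rewrite !Hg; auto.
        + intros t Ht. apply integrand_cont. apply integrand_dom_lt1; auto.
          destruct (Hin t Ht) as [T1 T2]. fold s. fold a. fold b.
          assert (-1 < sin t < 1).
          { split.
            - replace (-1) with (sin (-(PI/2))) by (rewrite sin_antisym, sin_PI2; ring). apply sin_increasing_1; lra.
            - rewrite <- sin_PI2. apply sin_increasing_1; lra. }
          unfold a, b, Dm. split; apply sqrt_lt_1_alt; nra.
        + intros t Ht. pose proof (Dm_pos s t ltac:(lra)) as HD. unfold Dm in *. split.
          * auto_derive. side_tac. field. apply Rgt_not_eq, sqrt_lt_R0; lra.
          * apply cont_d. auto_derive. side_tac.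
      - intros t Ht. unfold scal; simpl; unfold mult; simpl.
        assert (Ht' : -(PI/2) < t < PI / 2).
        { apply Hin; lra. }
        unfold s. rewrite Gm_eq; auto. apply cos_gt_0; lra. }
    rewrite Heq. apply (RInt_correct (V:=R_CompleteNormedModule)).
    apply (ex_RInt_continuous (V:=R_CompleteNormedModule)).
    intros z Hz. apply integrand_cont. apply integrand_dom_lt1; auto. fold s. fold a. fold b.
    assert (Rmin x1 x2 > a) by (apply Rmin_glb_lt; lra).
    assert (Rmax x1 x2 < b) by (apply Rmax_lub_lt; lra).
    lra.
  - intros x Hx. pose proof (asin_bound ((x * x - 2) / (2 * s))). lra.
  - intros d Hd.
    set (d' := Rmin d (PI / 2)).
    assert (Hd' : 0 < d' <= PI / 2 /\ d' <= d).
    { unfold d'. split; [split|]. apply Rmin_glb_lt; lra. apply Rmin_r. apply Rmin_l. }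
    assert (Hc : 0 <= cos d' < 1).
    { split. apply cos_ge_0; lra. rewrite <- cos_0. apply cos_decreasing_1; lra. }
    set (X := sqrt (2 - 2 * s * cos d')).
    assert (HX : a < X) by (unfold a, X; apply sqrt_lt_1_alt; nra).
    assert (HXr : 0 < X - a) by lra.
    exists (mkposreal _ HXr). intros y Hy Hy0. simpl in Hy.
    unfold ball in Hy; simpl in Hy; unfold AbsRing_ball, abs, minus, plus, opp in Hy; simpl in Hy.
    apply Rabs_lt_between in Hy.
    assert (y * y < 2 - 2 * s * cos d') by (apply lt_sqrt_sq; [lra| unfold X in Hy; lra]).
    assert (2 - 2 * s < y * y) by (apply sqrt_lt_sq; [lra|lra| fold a; lra]).
    assert (asin ((y * y - 2) / (2 * s)) <= - (PI / 2) + d').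
    { apply asin_le.
      - split; [apply div_ge_l| apply div_le_l]; nra.
      - lra.
      - replace (- (PI / 2) + d') with (- (PI / 2 - d')) by ring.
        rewrite sin_antisym, sin_shift. apply div_le_l; nra. }
    lra.
  - intros d Hd.
    set (d' := Rmin d (PI / 2)).
    assert (Hd' : 0 < d' <= PI / 2 /\ d' <= d).
    { unfold d'. split; [split|]. apply Rmin_glb_lt; lra. apply Rmin_r. apply Rmin_l. }
    assert (Hc : 0 <= cos d' < 1).
    { split. apply cos_ge_0; lra. rewrite <- cos_0. apply cos_decreasing_1; lra. }
    set (X := sqrt (2 + 2 * s * cos d')).
    assert (HX : X < b) by (unfold b, X; apply sqrt_lt_1_alt; nra).
    assert (HX0 : 0 <= X) by apply sqrt_pos.
    assert (HXr : 0 < b - X) by lra.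
    exists (mkposreal _ HXr). intros y Hy Hy0. simpl in Hy.
    unfold ball in Hy; simpl in Hy; unfold AbsRing_ball, abs, minus, plus, opp in Hy; simpl in Hy.
    apply Rabs_lt_between in Hy.
    assert (2 + 2 * s * cos d' < y * y) by (apply sqrt_lt_sq; [nra|lra| unfold X in Hy; lra]).
    assert (y * y < 2 + 2 * s) by (apply lt_sqrt_sq; [lra| fold b; lra]).
    assert (PI / 2 - d' <= asin ((y * y - 2) / (2 * s))).
    { apply asin_ge.
      - split; [apply div_ge_l| apply div_le_l]; nra.
      - lra.
      - rewrite sin_shift. apply div_ge_l; nra. }
    lra.
Qed.

Lemma log_int_lb a b e : 0 < e -> a + 1 <= b ->
  - ln (sqrt e) <= RInt (fun t => / sqrt ((t-a)^2 + e)) a b.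
Proof.
  intros He Hab.
  set (P := fun t => ln ((t-a) + sqrt ((t-a)^2 + e))).
  assert (Hpos : forall t, 0 < (t-a) + sqrt ((t-a)^2 + e)).
  { intros t. assert (Rabs (t-a) < sqrt ((t-a)^2+e)).
    { rewrite <- sqrt_Rsqr_abs. apply sqrt_lt_1_alt. split. apply Rle_0_sqr.
      unfold Rsqr; nra. }
    pose proof (Rle_abs (-(t-a))). rewrite Rabs_Ropp in H0. lra. }
  assert (HI : is_RInt (fun t => / sqrt ((t-a)^2 + e)) a b (minus (P b) (P a))).
  { apply (is_RInt_derive P).
    - intros t _. unfold P. auto_derive.
      + replace ((t + - a) * ((t + - a) * 1) + e) with ((t-a)^2+e) by ring.
        pose proof (pow2_ge_0 (t-a)). pose proof (Hpos t). repeat split; lra.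
      + pose proof (Hpos t) as Hp.
        assert (Hq: 0 < sqrt ((t-a)^2+e)) by (apply sqrt_lt_R0; idtac; pose proof (pow2_ge_0 (t-a)); lra).
        assert (Hs: sqrt ((t-a)^2+e) * sqrt ((t-a)^2+e) = (t-a)^2+e) by (apply sqrt_sqrt; pose proof (pow2_ge_0 (t-a)); lra).
        replace ((t + - a) * ((t + - a) * 1) + e) with ((t-a)^2+e) by ring.
        revert Hp Hq. generalize (sqrt ((t-a)^2+e)). intros q Hp Hq.
        field. split; lra.
    - intros t _. apply cont_d. auto_derive.
      match goal with |- 0 < ?X /\ _ => assert (HX: 0 < X) by (pose proof (Rle_0_sqr (t-a)); unfold Rsqr in *; lra) end. repeat split; try lra. apply Rgt_not_eq, sqrt_lt_R0; exact HX. }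
  rewrite (is_RInt_unique _ _ _ _ HI).
  unfold minus, plus, opp; simpl. unfold P.
  replace (a - a) with 0 by ring.
  replace (0 ^ 2 + e) with e by ring. rewrite Rplus_0_l.
  assert (0 <= ln (b - a + sqrt ((b - a) ^ 2 + e))).
  { rewrite <- ln_1. apply ln_le. lra. pose proof (sqrt_pos ((b - a) ^ 2 + e)). lra. }
  lra.
Qed.

Lemma sin_le_id x : 0 <= x <= PI -> 0 <= sin x <= x.
Proof.
  intros Hx. split. apply sin_ge_0; lra.
  destruct (Req_dec x 0) as [->|H]. rewrite sin_0; lra.
  left. apply sin_lt_x. lra.
Qed.

Lemma one_minus_cos x : 0 <= x <= PI -> 0 <= 1 - cos x <= x * x / 2.
Proof.
  intros Hx. pose proof PI_RGT_0.
  replace x with (2 * (x / 2)) by field.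
  rewrite cos_2a_sin.
  pose proof (sin_le_id (x / 2) ltac:(lra)) as [H1 H2].
  split. nra. nra.
Qed.

Lemma RInt_sin2 : RInt (fun t => sin t * sin t) 0 (PI / 2) = PI / 4.
Proof.
  apply is_RInt_unique.
  replace (PI / 4) with (minus ((fun t => t / 2 - sin (2 * t) / 4) (PI / 2)) ((fun t => t / 2 - sin (2 * t) / 4) 0)).
  - apply (is_RInt_derive (fun t => t / 2 - sin (2 * t) / 4)).
    + intros x _. auto_derive. auto. rewrite <- (Rmult_1_r 2) at 2. 
      replace (cos (2 * 1 * x)) with (cos (2 * x)) by (f_equal; ring).
      rewrite cos_2a_sin. field.
    + intros x _. apply cont_d. auto_derive. auto.
  - unfold minus, plus, opp; simpl. replace (2 * (PI / 2)) with PI by field.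
    rewrite sin_PI, Rmult_0_r, sin_0. field.
Qed.

Lemma RInt_sin_sym : RInt (fun t => sin t) (-(PI / 2)) (PI / 2) = 0.
Proof.
  apply is_RInt_unique.
  replace 0 with (minus ((fun t => - cos t) (PI / 2)) ((fun t => - cos t) (-(PI / 2)))).
  - apply (is_RInt_derive (fun t => - cos t)).
    + intros x _. auto_derive. auto. ring.
    + intros x _. apply cont_d. auto_derive. auto.
  - unfold minus, plus, opp; simpl. rewrite cos_neg, cos_PI2. ring.
Qed.

Lemma key_ineq D : 0 < D -> (2 - D) / sqrt 2 <= 2 / sqrt D - sqrt D.
Proof.
  intros HD.
  set (q := sqrt D). set (r := sqrt 2).
  assert (Hq : 0 < q) by (apply sqrt_lt_R0; lra).
  assert (Hr : 0 < r) by (apply sqrt_lt_R0; lra).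
  assert (Hqq : q * q = D) by (apply sqrt_sqrt; lra).
  assert (Hrr : r * r = 2) by (apply sqrt_sqrt; lra).
  assert (E1 : 2 / q - q - (2 - D) / r = (r - q) * (r - q) * (r + q) / (q * r)).
  { assert (E1' : r * r / q - q - (r * r - q * q) / r = (r - q) * (r - q) * (r + q) / (q * r)) by (field; split; lra).
    rewrite Hrr, Hqq in E1'. exact E1'. }
  assert (0 <= (r - q) * (r - q) * (r + q) / (q * r)).
  { apply Rmult_le_pos. apply Rmult_le_pos. apply Rle_0_sqr. lra.
    left. apply Rinv_0_lt_compat. nra. }
  lra.
Qed.

Lemma key_ineq_strict D : 0 < D < 2 -> (2 - D) / sqrt 2 < 2 / sqrt D - sqrt D.
Proof.
  intros HD.
  set (q := sqrt D). set (r := sqrt 2).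
  assert (Hq : 0 < q) by (apply sqrt_lt_R0; lra).
  assert (Hr : 0 < r) by (apply sqrt_lt_R0; lra).
  assert (Hqr : q < r) by (apply sqrt_lt_1_alt; lra).
  assert (Hqq : q * q = D) by (apply sqrt_sqrt; lra).
  assert (Hrr : r * r = 2) by (apply sqrt_sqrt; lra).
  assert (E1 : 2 / q - q - (2 - D) / r = (r - q) * (r - q) * (r + q) / (q * r)).
  { assert (E1' : r * r / q - q - (r * r - q * q) / r = (r - q) * (r - q) * (r + q) / (q * r)) by (field; split; lra).
    rewrite Hrr, Hqq in E1'. exact E1'. }
  assert (0 < (r - q) * (r - q) * (r + q) / (q * r)).
  { apply Rdiv_lt_0_compat. apply Rmult_lt_0_compat. nra. lra. nra. }
  lra.
Qed.

Lemma Km_pos s : 0 < s < 1 -> 0 < RInt (Gm s) (-(PI / 2)) (PI / 2).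
Proof.
  intros Hs. pose proof PI_RGT_0.
  set (c := fun t => (2 - Dm s t) / sqrt 2).
  assert (Hcc : forall t, continuous c t).
  { intros t. apply cont_d. unfold c, Dm. auto_derive. auto. }
  assert (Hgc : forall t, continuous (Gm s) t) by (intros; apply Gm_cont; lra).
  assert (Hc0 : RInt c (-(PI / 2)) (PI / 2) = 0).
  { unfold c, Dm.
    rewrite (RInt_ext _ (fun t => scal (- (2 * s / sqrt 2)) (sin t))).
    - rewrite (RInt_scal (V:=R_CompleteNormedModule)). assert (Hs0 : RInt sin (-(PI/2)) (PI/2) = 0) by exact RInt_sin_sym. rewrite Hs0.
      unfold scal; simpl; unfold mult; simpl. ring.
      apply (ex_RInt_continuous (V:=R_CompleteNormedModule)). intros; apply cont_d; auto_derive; auto.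
    - intros x _. unfold scal; simpl; unfold mult; simpl. field.
      apply Rgt_not_eq, sqrt_lt_R0; lra. }
  rewrite <- Hc0.
  rewrite <- (RInt_Chasles (V:=R_CompleteNormedModule) (Gm s) _ 0).
  rewrite <- (RInt_Chasles (V:=R_CompleteNormedModule) c _ 0).
  unfold plus; simpl.
  apply Rplus_lt_le_compat.
  - apply RInt_lt. lra. intros; apply Hgc. intros; apply Hcc.
    intros x Hx. unfold c, Gm. apply key_ineq_strict.
    pose proof (Dm_pos s x ltac:(lra)). split. lra.
    unfold Dm. assert (sin x < 0).
    { rewrite <- sin_0. apply sin_increasing_1; lra. }
    nra.
  - apply RInt_le. lra.
    apply (ex_RInt_continuous (V:=R_CompleteNormedModule)); intros; apply Hcc.
    apply (ex_RInt_continuous (V:=R_CompleteNormedModule)); intros; apply Hgc.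
    intros x Hx. unfold c, Gm. apply key_ineq. apply Dm_pos; lra.
  - apply (ex_RInt_continuous (V:=R_CompleteNormedModule)); intros; apply Hcc.
  - apply (ex_RInt_continuous (V:=R_CompleteNormedModule)); intros; apply Hcc.
  - apply (ex_RInt_continuous (V:=R_CompleteNormedModule)); intros; apply Hgc.
  - apply (ex_RInt_continuous (V:=R_CompleteNormedModule)); intros; apply Hgc.
Qed.

Lemma part5 E : 0 < E < 1 -> 0 < F E.
Proof.
  intros HE. rewrite F_lt1 by auto. apply Km_pos.
  split. apply sqrt_lt_R0; lra. rewrite <- sqrt_1. apply sqrt_lt_1_alt; lra.
Qed.

Lemma cont_inv_sqrt a e t : 0 < e -> continuous (fun t => / sqrt ((t - a) ^ 2 + e)) t.
Proof.
  intros He. apply cont_d. auto_derive.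
  assert (0 < (t + - a) * ((t + - a) * 1) + e) by (pose proof (Rle_0_sqr (t - a)); unfold Rsqr in *; lra).
  repeat split; try lra. apply Rgt_not_eq, sqrt_lt_R0; lra.
Qed.

Lemma RInt_minus_const (f : R -> R) a b c :
  (forall t, Rmin a b <= t <= Rmax a b -> continuous f t) ->
  RInt (fun t => f t - c) a b = RInt f a b - c * (b - a).
Proof.
  intros Hf.
  rewrite (RInt_minus (V:=R_CompleteNormedModule) f (fun _ => c)).
  - rewrite RInt_const. unfold minus, plus, opp, scal; simpl; unfold mult; simpl. ring.
  - apply (ex_RInt_continuous (V:=R_CompleteNormedModule)); auto.
  - apply ex_RInt_const.
Qed.

Lemma Gm_lb s t : 0 < s < 1 -> -(PI / 2) <= t <= PI / 2 ->
  / sqrt ((t - - (PI / 2)) ^ 2 + (1 - s)) - 2 <= Gm s t.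
Proof.
  intros Hs Ht. pose proof PI_RGT_0.
  set (psi := t - - (PI / 2)).
  assert (Hsin : sin t = - cos psi).
  { unfold psi. replace (t - - (PI / 2)) with (t + PI / 2) by ring.
    rewrite cos_plus, cos_PI2, sin_PI2. ring. }
  pose proof (one_minus_cos psi ltac:(unfold psi; lra)) as [C1 C2].
  pose proof (Dm_bounds s t ltac:(lra)) as [D1 D2].
  assert (HD : Dm s t <= 4 * (psi ^ 2 + (1 - s))).
  { unfold Dm. rewrite Hsin. replace (psi ^ 2) with (psi * psi) by ring. nra. }
  set (w := sqrt (psi ^ 2 + (1 - s))).
  assert (Hw : 0 < w) by (unfold w; apply sqrt_lt_R0; pose proof (pow2_ge_0 psi); lra).
  set (q := sqrt (Dm s t)).
  assert (Hq : 0 < q) by (unfold q; apply sqrt_lt_R0; lra).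
  assert (Hq2 : q <= 2) by (unfold q; rewrite <- (sqrt_square 2) by lra; apply sqrt_le_1_alt; lra).
  assert (Hqw : q <= 2 * w).
  { assert (H4: sqrt 4 = 2) by (rewrite <- (sqrt_square 2); [f_equal; ring | lra]).
    replace (2 * w) with (sqrt 4 * w) by (rewrite H4; ring). unfold q, w.
    rewrite <- sqrt_mult_alt by lra. apply sqrt_le_1_alt. lra. }
  unfold Gm. fold q.
  assert (/ w <= 2 / q).
  { unfold Rdiv. apply Rmult_le_reg_r with (q * w). nra.
    field_simplify; try lra. }
  lra.
Qed.

Lemma Km_lb s : 0 < s < 1 -> - ln (sqrt (1 - s)) - 2 * PI <= RInt (Gm s) (-(PI / 2)) (PI / 2).
Proof.
  intros Hs. pose proof PI_RGT_0. pose proof PI2_1.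
  apply Rle_trans with (RInt (fun t => / sqrt ((t - - (PI / 2)) ^ 2 + (1 - s)) - 2) (-(PI / 2)) (PI / 2)).
  - rewrite RInt_minus_const.
    + pose proof (log_int_lb (-(PI / 2)) (PI / 2) (1 - s) ltac:(lra) ltac:(lra)). lra.
    + intros; apply cont_inv_sqrt; lra.
  - apply RInt_le. lra.
    + apply (ex_RInt_continuous (V:=R_CompleteNormedModule)). intros z _.
      apply (continuous_minus (fun t => / sqrt ((t - - (PI / 2)) ^ 2 + (1 - s))) (fun _ => 2)).
      apply cont_inv_sqrt; lra. apply continuous_const.
    + apply (ex_RInt_continuous (V:=R_CompleteNormedModule)). intros; apply Gm_cont; lra.
    + intros t Ht. apply Gm_lb; lra.
Qed.

Lemma Gp_lb s t : 1 < s <= 2 -> 0 <= t <= PI / 2 ->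
  / sqrt ((t - 0) ^ 2 + (s - 1)) - 6 <= Gp s t.
Proof.
  intros Hs Ht. pose proof PI_RGT_0.
  pose proof (sin_le_id t ltac:(lra)) as [S1 S2].
  assert (HS : sin t * sin t <= t * t) by nra.
  assert (HS1 : sin t * sin t <= 1) by (pose proof (sin2_cos2 t); pose proof (Rle_0_sqr (cos t)); unfold Rsqr in *; lra).
  pose proof (Dp_pos s t ltac:(lra)) as HD0.
  assert (HD : Dp s t <= 16 * ((t - 0) ^ 2 + (s - 1))).
  { unfold Dp. replace ((t - 0) ^ 2) with (t * t) by ring. nra. }
  assert (HD8 : Dp s t <= 8) by (unfold Dp; nra).
  set (w := sqrt ((t - 0) ^ 2 + (s - 1))).
  assert (Hw : 0 < w) by (unfold w; apply sqrt_lt_R0; pose proof (pow2_ge_0 (t - 0)); lra).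
  set (q := sqrt (Dp s t)).
  assert (Hq : 0 < q) by (unfold q; apply sqrt_lt_R0; lra).
  assert (Hq3 : q <= 3) by (unfold q; rewrite <- (sqrt_square 3) by lra; apply sqrt_le_1_alt; lra).
  assert (Hqw : q <= 4 * w).
  { assert (H4: sqrt 16 = 4) by (rewrite <- (sqrt_square 4); [f_equal; ring | lra]).
    replace (4 * w) with (sqrt 16 * w) by (rewrite H4; ring). unfold q, w.
    rewrite <- sqrt_mult_alt by lra. apply sqrt_le_1_alt. lra. }
  unfold Gp. fold q.
  assert (/ w <= 4 * s / q).
  { unfold Rdiv. apply Rmult_le_reg_r with (q * w). nra.
    field_simplify; try lra. nra. }
  lra.
Qed.

Lemma Kp_lb s : 1 < s <= 2 -> - ln (sqrt (s - 1)) - 3 * PI <= RInt (Gp s) 0 (PI / 2).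
Proof.
  intros Hs. pose proof PI_RGT_0. pose proof PI2_1.
  apply Rle_trans with (RInt (fun t => / sqrt ((t - 0) ^ 2 + (s - 1)) - 6) 0 (PI / 2)).
  - rewrite RInt_minus_const.
    + pose proof (log_int_lb 0 (PI / 2) (s - 1) ltac:(lra) ltac:(lra)). lra.
    + intros; apply cont_inv_sqrt; lra.
  - apply RInt_le. lra.
    + apply (ex_RInt_continuous (V:=R_CompleteNormedModule)). intros z _.
      apply (continuous_minus (fun t => / sqrt ((t - 0) ^ 2 + (s - 1))) (fun _ => 6)).
      apply cont_inv_sqrt; lra. apply continuous_const.
    + apply (ex_RInt_continuous (V:=R_CompleteNormedModule)). intros; apply Gp_cont; lra.
    + intros t Ht. apply Gp_lb; lra.
Qed.

Lemma Gp_ub s t : 2 <= s -> Gp s t <= 3 - 2 * sqrt s * (sin t * sin t).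
Proof.
  intros Hs.
  set (S := sin t * sin t).
  assert (HS : 0 <= S <= 1) by (unfold S; pose proof (sin2_cos2 t); pose proof (Rle_0_sqr (cos t)); pose proof (Rle_0_sqr (sin t)); unfold Rsqr in *; lra).
  pose proof (Dp_pos s t ltac:(lra)) as HD0.
  set (q := sqrt (Dp s t)).
  assert (Hq : 0 < q) by (unfold q; apply sqrt_lt_R0; lra).
  assert (Hqq : q * q = Dp s t) by (unfold q; apply sqrt_sqrt; lra).
  set (r := sqrt s).
  assert (Hr : 0 < r) by (unfold r; apply sqrt_lt_R0; lra).
  assert (Hrr : r * r = s) by (unfold r; apply sqrt_sqrt; lra).
  assert (HD1 : 2 <= Dp s t) by (unfold Dp; fold S; nra).
  assert (HD2 : Dp s t <= 4 * s) by (unfold Dp; fold S; nra).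
  assert (Hq1 : 1.4 <= q) by nra.
  assert (Hq2 : q <= 2 * r) by nra.
  assert (HG : Gp s t = 4 / q - 4 * (1 + s) * S / q).
  { unfold Gp. fold q. replace (2 * q) with (2 * (q * q) / q) by (field; lra).
    rewrite Hqq. unfold Dp. fold S. field. lra. }
  rewrite HG.
  assert (4 / q <= 3).
  { apply Rmult_le_reg_r with q; auto. field_simplify; lra. }
  assert (2 * r * S <= 4 * (1 + s) * S / q).
  { apply Rmult_le_reg_r with q; auto. field_simplify; try lra. assert (H1: r * q <= 2 * s) by (rewrite <- Hrr; nra). assert (H2: S * (r * q) <= S * (2 * s)) by (apply Rmult_le_compat_l; lra). lra. }
  lra.
Qed.

Lemma Kp_ub s : 2 <= s -> RInt (Gp s) 0 (PI / 2) <= 3 * (PI / 2) - 2 * sqrt s * (PI / 4).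
Proof.
  intros Hs. pose proof PI_RGT_0.
  apply Rle_trans with (RInt (fun t => 3 - 2 * sqrt s * (sin t * sin t)) 0 (PI / 2)).
  - apply RInt_le. lra.
    + apply (ex_RInt_continuous (V:=R_CompleteNormedModule)). intros; apply Gp_cont; lra.
    + apply (ex_RInt_continuous (V:=R_CompleteNormedModule)). intros; apply cont_d; auto_derive; auto.
    + intros t Ht. apply Gp_ub; lra.
  - right.
    rewrite (RInt_minus (V:=R_CompleteNormedModule) (fun _ => 3) (fun t => 2 * sqrt s * (sin t * sin t))).
    + rewrite (RInt_scal (V:=R_CompleteNormedModule) (fun t => sin t * sin t) _ _ (2 * sqrt s)).
      * rewrite RInt_const, RInt_sin2. unfold minus, plus, opp, scal; simpl; unfold mult; simpl. ring.
      * apply (ex_RInt_continuous (V:=R_CompleteNormedModule)). intros; apply cont_d; auto_derive; auto.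
    + apply ex_RInt_const.
    + apply (ex_RInt_continuous (V:=R_CompleteNormedModule)). intros; apply cont_d; auto_derive; auto.
Qed.

Lemma ln_small x K : 0 < x -> x < exp (- K) -> K < - ln x.
Proof.
  intros Hx H. apply ln_increasing in H; auto. rewrite ln_exp in H. lra.
Qed.

Lemma lim_right M : exists d, 0 < d /\ forall E, 1 < E < 1 + d -> M < F E.
Proof.
  set (K := M + 3 * PI).
  set (d := Rmin 1 (exp (- K) * exp (- K))).
  assert (Hd : 0 < d) by (unfold d; apply Rmin_glb_lt; [lra| pose proof (exp_pos (- K)); nra]).
  exists d. split; auto. intros E HE.
  rewrite F_gt1 by lra.
  set (s := sqrt E).
  assert (Hs : 1 < s) by (unfold s; rewrite <- sqrt_1; apply sqrt_lt_1_alt; lra).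
  assert (Hss : s * s = E) by (unfold s; apply sqrt_sqrt; lra).
  assert (Hsd : s - 1 < d) by nra.
  assert (Hd1 : d <= 1) by apply Rmin_l.
  assert (Hd2 : d <= exp (- K) * exp (- K)) by apply Rmin_r.
  pose proof (Kp_lb s ltac:(nra)).
  assert (K < - ln (sqrt (s - 1))).
  { apply ln_small. apply sqrt_lt_R0; lra.
    rewrite <- (sqrt_square (exp (- K))) by (left; apply exp_pos).
    apply sqrt_lt_1_alt. lra. }
  unfold K in *. lra.
Qed.

Lemma lim_left M : exists d, 0 < d <= 1 /\ forall E, 1 - d < E < 1 -> M < F E.
Proof.
  set (K := M + 2 * PI).
  set (d := Rmin 1 (exp (- K) * exp (- K))).
  assert (Hd : 0 < d) by (unfold d; apply Rmin_glb_lt; [lra| pose proof (exp_pos (- K)); nra]).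
  assert (Hd1 : d <= 1) by apply Rmin_l.
  assert (Hd2 : d <= exp (- K) * exp (- K)) by apply Rmin_r.
  exists d. split; [lra|]. intros E HE.
  rewrite F_lt1 by lra.
  set (s := sqrt E).
  assert (Hs : 0 < s < 1) by (unfold s; split; [apply sqrt_lt_R0; lra| rewrite <- sqrt_1; apply sqrt_lt_1_alt; lra]).
  assert (Hss : s * s = E) by (unfold s; apply sqrt_sqrt; lra).
  assert (Hsd : 1 - s < d) by nra.
  pose proof (Km_lb s Hs).
  assert (K < - ln (sqrt (1 - s))).
  { apply ln_small. apply sqrt_lt_R0; lra.
    rewrite <- (sqrt_square (exp (- K))) by (left; apply exp_pos).
    apply sqrt_lt_1_alt. lra. }
  unfold K in *. lra.
Qed.

Lemma lim_infty M : exists N, forall E, N < E -> F E < M.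
Proof.
  pose proof PI_RGT_0.
  set (K := Rabs (3 - 2 * M / PI) + 2).
  assert (HK : 2 <= K) by (unfold K; pose proof (Rabs_pos (3 - 2 * M / PI)); lra).
  exists ((K * K) * (K * K)). intros E HE.
  assert (HK2 : 4 <= K * K) by nra. assert (HK4 : 16 <= (K * K) * (K * K)) by nra. assert (HE1 : 1 < E) by lra.
  rewrite F_gt1 by lra.
  set (s := sqrt E).
  assert (Hs : K * K < s).
  { unfold s. rewrite <- (sqrt_square (K * K)) by nra. apply sqrt_lt_1_alt. nra. }
  assert (Hr : K < sqrt s).
  { rewrite <- (sqrt_square K) by lra. apply sqrt_lt_1_alt. nra. }
  pose proof (Kp_ub s ltac:(nra)).
  assert (3 - 2 * M / PI < sqrt s) by (pose proof (Rle_abs (3 - 2 * M / PI)); unfold K in Hr; lra).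
  assert (3 * (PI / 2) - 2 * sqrt s * (PI / 4) < M).
  { assert (H' : (3 - 2 * M / PI) * (PI / 2) < sqrt s * (PI / 2)) by (apply Rmult_lt_compat_r; lra).
    replace ((3 - 2 * M / PI) * (PI / 2)) with (3 * (PI / 2) - M) in H' by (field; lra). lra. }
  lra.
Qed.

Definition Gp1 (s t : R) :=
  (2 * (1 - sin t * sin t) * Dp s t - 4 * s * (1 + sin t * sin t)) / (Dp s t * sqrt (Dp s t)).

Lemma Gp_deriv s t : 1 < s -> is_derive (fun u => Gp u t) s (Gp1 s t).
Proof.
  intros Hs. pose proof (Dp_pos s t Hs) as HD.
  unfold Gp, Gp1. unfold Dp in *.
  auto_derive. side_tac.
  replace (2 * (1 + s) * (sin t * sin t) + 2 * s + - (2)) with (Dp s t) by (unfold Dp; ring).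
  replace (2 * (1 + s) * (sin t * sin t) + 2 * s - 2) with (Dp s t) by (unfold Dp; ring).
  fold (Dp s t) in HD.
  assert (Hq : 0 < sqrt (Dp s t)) by (apply sqrt_lt_R0; lra).
  assert (Hqq : sqrt (Dp s t) * sqrt (Dp s t) = Dp s t) by (apply sqrt_sqrt; lra).
  revert Hq Hqq. generalize (sqrt (Dp s t)). intros q Hq Hqq.
  rewrite <- Hqq. field. lra.
Qed.

Lemma Gp1_neg s t : 1 < s -> Gp1 s t < 0.
Proof.
  intros Hs. pose proof (Dp_pos s t Hs) as HD.
  set (S := sin t * sin t).
  assert (HS : 0 <= S <= 1) by (unfold S; pose proof (sin2_cos2 t); pose proof (Rle_0_sqr (cos t)); pose proof (Rle_0_sqr (sin t)); unfold Rsqr in *; lra).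
  unfold Gp1. fold S.
  assert (Hq : 0 < sqrt (Dp s t)) by (apply sqrt_lt_R0; lra).
  apply Rdiv_neg_pos; [| apply Rmult_lt_0_compat; lra].
  unfold Dp. fold S.
  assert (N : - (1 + s) * S * S + (2 - s) * S - 1 < 0).
  { destruct (Rle_or_lt 2 s).
    - assert ((2 - s) * S <= 0) by nra. assert (0 <= (1 + s) * S * S) by (apply Rmult_le_pos; nra). lra.
    - assert ((2 - s) * S <= S) by nra. assert (2 * S * S <= (1 + s) * S * S) by nra. nra. }
  nra.
Qed.

Lemma c2_sin x y : continuity_2d_pt (fun u v => sin v) x y.
Proof.
  apply (continuity_1d_2d_pt_comp sin (fun u v => v)). apply continuity_sin. apply continuity_2d_pt_id2.
Qed.

Lemma c2_Dp x y : continuity_2d_pt Dp x y.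
Proof.
  unfold Dp.
  apply continuity_2d_pt_minus; [| apply continuity_2d_pt_const].
  apply continuity_2d_pt_plus.
  - apply continuity_2d_pt_mult.
    + apply continuity_2d_pt_mult. apply continuity_2d_pt_const.
      apply continuity_2d_pt_plus. apply continuity_2d_pt_const. apply continuity_2d_pt_id1.
    + apply continuity_2d_pt_mult; apply c2_sin.
  - apply continuity_2d_pt_mult. apply continuity_2d_pt_const. apply continuity_2d_pt_id1.
Qed.

Lemma c2_Gp1 x y : 1 < x -> continuity_2d_pt Gp1 x y.
Proof.
  intros Hx. pose proof (Dp_pos x y Hx) as HD.
  assert (Hq : continuity_2d_pt (fun u v => sqrt (Dp u v)) x y).
  { apply (continuity_1d_2d_pt_comp sqrt Dp). apply continuity_pt_sqrt; lra. apply c2_Dp. }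
  unfold Gp1, Rdiv.
  apply continuity_2d_pt_mult.
  - apply continuity_2d_pt_minus.
    + apply continuity_2d_pt_mult; [| apply c2_Dp].
      apply continuity_2d_pt_mult. apply continuity_2d_pt_const.
      apply continuity_2d_pt_minus. apply continuity_2d_pt_const.
      apply continuity_2d_pt_mult; apply c2_sin.
    + apply continuity_2d_pt_mult.
      apply continuity_2d_pt_mult. apply continuity_2d_pt_const. apply continuity_2d_pt_id1.
      apply continuity_2d_pt_plus. apply continuity_2d_pt_const.
      apply continuity_2d_pt_mult; apply c2_sin.
  - apply (continuity_2d_pt_inv (fun u v => Dp u v * sqrt (Dp u v))).
    + apply continuity_2d_pt_mult. apply c2_Dp. exact Hq.
    + assert (0 < sqrt (Dp x y)) by (apply sqrt_lt_R0; lra). nra.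
Qed.

Lemma param_cont (f : R -> R -> R) a b x (P : R -> Prop) :
  a < b ->
  (forall t, a <= t <= b -> continuity_2d_pt f x t) ->
  locally x P ->
  (forall y, P y -> forall t, continuous (f y) t) ->
  continuous (fun y => RInt (f y) a b) x.
Proof.
  intros Hab Hc HP Hfc.
  apply filterlim_locally. intros eps.
  assert (He' : 0 < eps / (2 * (b - a))) by (apply Rdiv_lt_0_compat; [apply cond_pos| lra]).
  destruct (uniform_continuity_2d_1d' f a b x Hc (mkposreal _ He')) as [d Hd].
  assert (Px : P x) by (apply locally_singleton; exact HP).
  assert (Hl : locally x (fun y => Rabs (y - x) < d)).
  { exists d. intros y Hy. exact Hy. }
  generalize (filter_and _ _ HP Hl). apply filter_imp. intros y [Py Hy].
  unfold ball; simpl; unfold AbsRing_ball, abs, minus, plus, opp; simpl.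
  assert (Heq : RInt (fun t => f y t - f x t) a b = RInt (f y) a b - RInt (f x) a b).
  { exact (RInt_minus (V:=R_CompleteNormedModule) (f y) (f x) a b
      ltac:(apply (ex_RInt_continuous (V:=R_CompleteNormedModule)); intros; apply Hfc; auto)
      ltac:(apply (ex_RInt_continuous (V:=R_CompleteNormedModule)); intros; apply Hfc; auto)). }
  replace (RInt (f y) a b + - RInt (f x) a b) with (RInt (fun t => f y t - f x t) a b) by (rewrite Heq; simpl; lra).
  apply Rle_lt_trans with ((b - a) * (eps / (2 * (b - a)))).
  + apply abs_RInt_le_const. lra.
    apply (ex_RInt_continuous (V:=R_CompleteNormedModule)). intros z _.
    apply (continuous_minus (f y) (f x)); apply Hfc; auto.
    intros t Ht. left.
    apply (Hd t x t y Ht); try lra.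
    * pose proof (cond_pos d); lra.
    * apply Rabs_lt_between in Hy; lra.
    * rewrite Rminus_eq_0, Rabs_R0. apply cond_pos.
  + replace ((b - a) * (eps / (2 * (b - a)))) with (eps / 2) by (field; lra).
    pose proof (cond_pos eps). lra.
Qed.

Definition Kp (s : R) := RInt (Gp s) 0 (PI / 2).
Definition Kp1 (s : R) := RInt (Gp1 s) 0 (PI / 2).

Lemma Gp1_cont s t : 1 < s -> continuous (Gp1 s) t.
Proof.
  intros Hs. pose proof (Dp_pos s t Hs) as HD. apply cont_d. unfold Gp1. unfold Dp in *.
  auto_derive. side_tac. assert (0 < sqrt (2 * (1 + s) * (sin t * sin t) + 2 * s - 2)) by (apply sqrt_lt_R0; lra).
  apply Rgt_not_eq. replace (2 * (1 + s) * (sin t * sin t) + 2 * s + - (2)) with (2 * (1 + s) * (sin t * sin t) + 2 * s - 2) by ring.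
  nra.
Qed.

Lemma near_gt1 s : 1 < s -> locally s (fun y => 1 < y).
Proof.
  intros Hs. assert (H : 0 < s - 1) by lra. exists (mkposreal _ H). intros y Hy.
  unfold ball in Hy; simpl in Hy; unfold AbsRing_ball, abs, minus, plus, opp in Hy; simpl in Hy.
  apply Rabs_lt_between in Hy. lra.
Qed.

Lemma Kp1_cont s : 1 < s -> continuous Kp1 s.
Proof.
  intros Hs. unfold Kp1.
  apply (param_cont Gp1 0 (PI / 2) s (fun y => 1 < y)).
  - pose proof PI_RGT_0; lra.
  - intros; apply c2_Gp1; auto.
  - apply near_gt1; auto.
  - intros y Hy t. apply Gp1_cont; auto.
Qed.

Lemma Kp_deriv s : 1 < s -> is_derive Kp s (Kp1 s).
Proof.
  intros Hs. unfold Kp, Kp1.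
  rewrite <- (RInt_ext (fun t => Derive (fun u => Gp u t) s)).
  - apply (is_derive_RInt_param Gp 0 (PI / 2) s).
    + apply (filter_imp (fun y => 1 < y)). intros y Hy t _. eexists. apply Gp_deriv; auto.
      apply near_gt1; auto.
    + intros t _. apply (continuity_2d_pt_ext_loc Gp1).
      * assert (H : 0 < s - 1) by lra. exists (mkposreal _ H). intros u v Hu _.
        simpl in Hu. apply Rabs_lt_between in Hu.
        symmetry. apply is_derive_unique. apply Gp_deriv. lra.
      * apply c2_Gp1; auto.
    + apply (filter_imp (fun y => 1 < y)). intros y Hy.
      apply (ex_RInt_continuous (V:=R_CompleteNormedModule)). intros; apply Gp_cont; auto.
      apply near_gt1; auto.
  - intros t _. apply is_derive_unique. apply Gp_deriv; auto.
Qed.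

Lemma Kp1_neg s : 1 < s -> Kp1 s < 0.
Proof.
  intros Hs. unfold Kp1. pose proof PI_RGT_0.
  apply Rlt_le_trans with (RInt (fun _ => 0) 0 (PI/2)).
  - apply RInt_lt. lra. intros; apply continuous_const. intros; apply Gp1_cont; auto.
    intros; apply Gp1_neg; auto.
  - rewrite RInt_const. unfold scal; simpl; unfold mult; simpl. lra.
Qed.

Lemma sqrt_gt1 E : 1 < E -> 1 < sqrt E.
Proof. intros. rewrite <- sqrt_1. apply sqrt_lt_1_alt; lra. Qed.

Lemma F_deriv E : 1 < E -> is_derive F E (Kp1 (sqrt E) / (2 * sqrt E)).
Proof.
  intros HE. pose proof (sqrt_gt1 E HE) as Hs.
  apply (is_derive_ext_loc (fun y => Kp (sqrt y))).
  - apply (filter_imp (fun y => 1 < y)). intros y Hy. unfold Kp. symmetry. apply F_gt1; auto.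
    apply near_gt1; auto.
  - replace (Kp1 (sqrt E) / (2 * sqrt E)) with (scal (/ (2 * sqrt E)) (Kp1 (sqrt E))).
    + apply (is_derive_comp Kp sqrt E). apply Kp_deriv; auto.
      auto_derive. lra. field. lra.
    + unfold scal; simpl; unfold mult; simpl. field. lra.
Qed.

Lemma DF E : 1 < E -> Derive F E = Kp1 (sqrt E) / (2 * sqrt E).
Proof. intros. apply is_derive_unique. apply F_deriv; auto. Qed.

Lemma F_cont E : 1 < E -> continuous F E.
Proof. intros. apply cont_d. eexists. apply F_deriv; auto. Qed.

Lemma F_cont_pt E : 1 < E -> continuity_pt F E.
Proof. intros. apply continuity_pt_filterlim. apply F_cont; auto. Qed.

Lemma DF_neg E : 1 < E -> Derive F E < 0.
Proof.
  intros HE. rewrite DF by auto. pose proof (sqrt_gt1 E HE).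
  apply Rdiv_neg_pos. apply Kp1_neg; auto. lra.
Qed.

Lemma DF_cont E : 1 < E -> continuous (Derive F) E.
Proof.
  intros HE. pose proof (sqrt_gt1 E HE) as Hs.
  apply (continuous_ext_loc (Derive F) (fun y => Kp1 (sqrt y) * / (2 * sqrt y))).
  - apply (filter_imp (fun y => 1 < y)). intros y Hy. rewrite DF by auto. reflexivity.
    apply near_gt1; auto.
  - apply (continuous_mult (fun y => Kp1 (sqrt y)) (fun y => / (2 * sqrt y))).
    + apply (continuous_comp sqrt Kp1). apply cont_d. auto_derive. lra.
      apply Kp1_cont; auto.
    + apply cont_d. auto_derive. repeat split; try lra. 
Qed.

Theorem proposition3p12 :
  (* (1) F is C^1 on (1,+oo) and F' < 0 there *)
  ((forall E, 1 < E -> ex_derive F E /\ continuous (Derive F) E) /\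
   (forall E, 1 < E -> Derive F E < 0)) /\
  (* (2) F(E) -> -oo as E -> +oo *)
  is_lim F p_infty m_infty /\
  (* (3) F(E) -> +oo as E -> 1+ and as E -> 1- *)
  (filterlim F (at_right 1) (Rbar_locally p_infty) /\
   filterlim F (at_left 1) (Rbar_locally p_infty)) /\
  (* (4) unique zero E_c in (1,+oo), with F'(E_c) < 0 *)
  (exists Ec, 1 < Ec /\ F Ec = 0 /\
     (forall E, 1 < E -> F E = 0 -> E = Ec) /\ Derive F Ec < 0) /\
  (* (5) F > 0 on (0,1) *)
  (forall E, 0 < E < 1 -> 0 < F E).
Proof.
  split; [split|split; [|split; [split|split]]].
  - intros E HE. split. eexists. apply F_deriv; auto. apply DF_cont; auto.
  - apply DF_neg.
  - intros P [M HM]. destruct (lim_infty M) as [N HN]. exists N. intros x Hx. apply HM, HN; auto.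
  - intros P [M HM]. destruct (lim_right M) as [d [Hd H]]. exists (mkposreal d Hd).
    intros y Hy Hy1. simpl in Hy.
    unfold ball in Hy; simpl in Hy; unfold AbsRing_ball, abs, minus, plus, opp in Hy; simpl in Hy.
    apply Rabs_lt_between in Hy. apply HM, H. lra.
  - intros P [M HM]. destruct (lim_left M) as [d [Hd H]]. assert (Hd0 : 0 < d) by lra. exists (mkposreal d Hd0).
    intros y Hy Hy1. simpl in Hy.
    unfold ball in Hy; simpl in Hy; unfold AbsRing_ball, abs, minus, plus, opp in Hy; simpl in Hy.
    apply Rabs_lt_between in Hy. apply HM, H. lra.
  - destruct (lim_right 0) as [d [Hd H1]].
    set (E1 := 1 + d / 2).
    assert (HE1 : 0 < F E1) by (apply H1; unfold E1; lra).
    destruct (lim_infty 0) as [N HN].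
    set (E2 := Rmax (N + 1) (E1 + 1)).
    assert (HE2a : N + 1 <= E2) by apply Rmax_l.
    assert (HE2b : E1 + 1 <= E2) by apply Rmax_r.
    assert (HE2 : F E2 < 0) by (apply HN; lra).
    destruct (IVT_interv (fun x => - F x) E1 E2) as [Ec [HEc HFc]].
    + intros a Ha. apply continuity_pt_opp. apply F_cont_pt. unfold E1 in *; lra.
    + lra.
    + lra.
    + lra.
    + assert (Hc1 : 1 < Ec) by (unfold E1 in *; lra).
      exists Ec. split; auto. split; [lra|]. split.
      * intros E HE HFE. destruct (Req_dec E Ec) as [|Hne]; auto. exfalso.
        destruct (MVT_gen F E Ec (Derive F)) as [c [Hc Hmvt]].
        -- intros x Hx. apply Derive_correct. eexists. apply F_deriv.
           assert (Rmin E Ec > 1) by (apply Rmin_glb_lt; lra). lra.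
        -- intros x Hx. apply F_cont_pt.
           assert (Rmin E Ec > 1) by (apply Rmin_glb_lt; lra). lra.
        -- assert (Rmin E Ec > 1) by (apply Rmin_glb_lt; lra).
           assert (Hdc : Derive F c < 0) by (apply DF_neg; lra).
           assert (F Ec = 0) by lra.
           rewrite HFE, H0 in Hmvt.
           assert (Ec - E <> 0) by lra.
           assert (Derive F c * (Ec - E) <> 0) by (apply Rmult_integral_contrapositive; split; lra).
           lra.
      * apply DF_neg; auto.
  - apply part5.
Qed.
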